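(* Let $G$ be a digraph. (a) Every allowed elementary path $\alpha$ in $G$ can be written as a concatenation $$\alpha=\beta_1*\gamma_1*\beta_2*\gamma_2*\cdots*\beta_{k-1}*\gamma_{k-1}*\beta_k$$ of simplicial allowed elementary paths $\beta_i$ (each $\beta_i$ possibly a single vertex) and directed loops $\gamma_i$; this decomposition is uniquely determined by the following algorithm: writing $\alpha=v_0\cdots v_n$, if all $v_i$ are distinct put $\alpha=\beta_1$; otherwise let $i_1$ be the smallest index such that $v_{i_1}=v_{j_1}$ for some $j_1<i_1$, put $\beta_1=v_0\cdots v_{j_1}$, $\gamma_1=v_{j_1}v_{j_1+1}\cdots v_{i_1}$, and apply the same procedure to $v_{i_1}v_{i_1+1}\cdots v_n$. (b) If $f$ is a discrete Morse function on $G$ and $\alpha$ is non-critical, then in the decomposition of (a) some $\beta_i$ is non-critical.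
   Context: A digraph $G=(V,E)$ consists of a set $V$ and $E\subseteq(V\times V)\setminus\{(v,v)\}$; $(u,v)\in E$ is written $u\to v$. An allowed elementary $n$-path is a sequence $v_0\cdots v_n$ of vertices with $v_{i-1}\to v_i\in E$ for $1\le i\le n$; it is simplicial if all its vertices are distinct. A directed loop is an allowed elementary path $v_0v_1\cdots v_nv_0$ with $n\ge1$. The concatenation of $v_0\cdots v_p$ and $w_0\cdots w_q$ is $v_0\cdots v_pw_1\cdots w_q$ if $v_p=w_0$ (and $0$ otherwise). For allowed elementary paths, $\gamma'<\gamma$ (or $\gamma>\gamma'$) means $\gamma'$ is obtained from $\gamma$ by deleting some entries. A map $f:V\to[0,+\infty)$ is a discrete Morse function on $G$ if for every allowed elementary path $v_0\cdots v_n$: (i) there is at most one index $i$ with $f(v_i)=0$ such that $v_0\cdots v_{i-1}v_{i+1}\cdots v_n$ is an allowed elementary $(n-1)$-path; (ii) there is at most one vertex $u$ with $f(u)=0$ such that for some $-1\le j\le n$ the sequence $v_0\cdots v_juv_{j+1}\cdots v_n$ (meaning $uv_0\cdots v_n$ if $j=-1$, $v_0\cdots v_nu$ if $j=n$) is an allowed elementary $(n+1)$-path. Set $f(v_0\cdots v_n)=\sum_if(v_i)$. An allowed elementary $n$-path $\gamma$ is critical if there is no allowed elementary $(n-1)$-path $\beta<\gamma$ with $f(\beta)=f(\gamma)$ and no allowed elementary $(n+1)$-path $\alpha>\gamma$ with $f(\alpha)=f(\gamma)$; otherwise it is non-critical. *)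

(* Defs.v *)
From mathcomp Require Import all_boot all_order all_algebra.
From mathcomp Require Import reals.
Set Implicit Arguments. Unset Strict Implicit. Unset Printing Implicit Defensive.
Import Order.TTheory GRing.Theory Num.Theory.


(* A digraph on the vertex type V is given by an edge relation e : rel V,
   assumed irreflexive (no self loops) in the theorem.
   An allowed elementary n-path v_0 ... v_n is a sequence of n+1 vertices
   with consecutive entries joined by edges. *)
Section Digraph.
Variable V : eqType.
Variable e : rel V.

Definition allowed (p : seq V) : bool :=
  if p is x :: s then path e x s else false.

Definition simplicial (p : seq V) : bool := allowed p && uniq p.

Definition directed_loop (p : seq V) : bool :=
  if p is x :: s then [&& allowed p, 3 <= size p & last x s == x] else false.

(* concatenation v_0..v_p * w_0..w_q = v_0..v_p w_1..w_q if v_p = w_0, else 0 (None) *)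
Definition concat (p q : seq V) : option (seq V) :=
  match p, q with
  | x :: s, y :: t => if last x s == y then Some (p ++ t) else None
  | _, _ => None
  end.

Fixpoint concat_all (ps : seq (seq V)) : option (seq V) :=
  match ps with
  | [::] => None
  | [:: p] => Some p
  | p :: ps' => obind (concat p) (concat_all ps')
  end.

(* One step of the algorithm: scanning v_0 v_1 ..., find the smallest i1 with
   v_{i1} = v_{j1} for some j1 < i1; return (beta_1, gamma_1, rest) where
   beta_1 = v_0..v_{j1}, gamma_1 = v_{j1}..v_{i1}, rest = v_{i1}..v_n.
   [pre] holds v_0..v_{i-1}. *)
Fixpoint split_loop (pre s : seq V) : option (seq V * seq V * seq V) :=
  match s with
  | [::] => None
  | x :: s' =>
      if x \in pre then
        let j := index x pre in
        Some (take j.+1 pre, drop j pre ++ [:: x], x :: s')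
      else split_loop (rcons pre x) s'
  end.

Fixpoint decomp_fuel (n : nat) (p : seq V) : seq (seq V * seq V) * seq V :=
  match n with
  | 0 => ([::], p)
  | n'.+1 =>
      match split_loop [::] p with
      | None => ([::], p)
      | Some (b, g, r) =>
          let (ps, bk) := decomp_fuel n' r in ((b, g) :: ps, bk)
      end
  end.

(* The decomposition of the paper: ([:: (beta_1,gamma_1); ...;
   (beta_{k-1},gamma_{k-1})], beta_k). Each step strictly shortens the
   remaining path, so size p steps of fuel suffice. *)
Definition decomp (p : seq V) : seq (seq V * seq V) * seq V :=
  decomp_fuel (size p) p.

Definition decomp_pieces (p : seq V) : seq (seq V) :=
  flatten [seq [:: bg.1; bg.2] | bg <- (decomp p).1] ++ [:: (decomp p).2].

Definition decomp_betas (p : seq V) : seq (seq V) :=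
  [seq bg.1 | bg <- (decomp p).1] ++ [:: (decomp p).2].

Variable R : realType.
Variable f : V -> R.

Definition fpath (p : seq V) : R := (\sum_(v <- p) f v)%R.

(* deleting the entry at index i ; inserting u at position k (0 <= k <= size p,
   k = 0 meaning u v_0 ... v_n, k = size p meaning v_0 ... v_n u) *)
Definition del_at (i : nat) (p : seq V) : seq V := take i p ++ drop i.+1 p.
Definition ins_at (k : nat) (u : V) (p : seq V) : seq V := take k p ++ u :: drop k p.

Definition morse_cond_i : Prop :=
  forall (x : V) (s : seq V), allowed (x :: s) ->
  forall i j : nat, (i < size (x :: s))%N -> (j < size (x :: s))%N ->
    f (nth x (x :: s) i) = 0%R -> allowed (del_at i (x :: s)) ->
    f (nth x (x :: s) j) = 0%R -> allowed (del_at j (x :: s)) ->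
    i = j.

Definition morse_cond_ii : Prop :=
  forall p : seq V, allowed p ->
  forall u w : V,
    f u = 0%R -> (exists2 k, (k <= size p)%N & allowed (ins_at k u p)) ->
    f w = 0%R -> (exists2 k, (k <= size p)%N & allowed (ins_at k w p)) ->
    u = w.

Definition discrete_morse : Prop :=
  (forall v, (0 <= f v)%R) /\ morse_cond_i /\ morse_cond_ii.

(* gamma' < gamma : gamma' is obtained from gamma by deleting some entries *)
Definition critical (g : seq V) : Prop :=
  ~ (exists b, [/\ allowed b, size b = (size g).-1, subseq b g & fpath b = fpath g])
  /\ ~ (exists a, [/\ allowed a, size a = (size g).+1, subseq g a & fpath a = fpath g]).

End Digraph.

(* Main.v *)
Require Import Defs.
From mathcomp Require Import all_boot all_order all_algebra.
From mathcomp Require Import reals.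
From mathcomp Require Import ring lra zify.
From Stdlib Require Classical_Prop.
Set Implicit Arguments. Unset Strict Implicit. Unset Printing Implicit Defensive.
Import Order.TTheory GRing.Theory Num.Theory.

Lemma allowed_catl (V : eqType) (e : rel V) (p q : seq V) :
  p != [::] -> allowed e (p ++ q) -> allowed e p.
Proof. by case: p => [|x p] //= _; rewrite cat_path => /andP[]. Qed.

Lemma allowed_catr (V : eqType) (e : rel V) (p q : seq V) :
  q != [::] -> allowed e (p ++ q) -> allowed e q.
Proof.
case: q => [|y q] // _; case: p => [|x p] //=.
by rewrite cat_path => /andP[_] /= /andP[].
Qed.

Lemma drop_catl (V : Type) i (P Q : seq V) : i <= size P -> drop i (P ++ Q) = drop i P ++ Q.
Proof.
move=> H; rewrite drop_cat; case: ltnP => // H2.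
have -> : i = size P by apply/eqP; rewrite eqn_leq H H2.
by rewrite subnn drop0 drop_size.
Qed.

Lemma take_catr (V : Type) i (P Q : seq V) : take (size P + i) (P ++ Q) = P ++ take i Q.
Proof. by rewrite take_cat ltnNge leq_addr /= addKn. Qed.

Lemma drop_catr (V : Type) i (P Q : seq V) : drop (size P + i) (P ++ Q) = drop i Q.
Proof. by rewrite drop_cat ltnNge leq_addr /= addKn. Qed.

Lemma del_at_catl (V : eqType) i (P Q : seq V) : i < size P -> del_at i (P ++ Q) = del_at i P ++ Q.
Proof. by move=> H; rewrite /del_at takel_cat ?(ltnW H) // drop_catl // catA. Qed.

Lemma del_at_catr (V : eqType) i (P Q : seq V) : del_at (size P + i) (P ++ Q) = P ++ del_at i Q.
Proof. by rewrite /del_at take_catr -addnS drop_catr catA. Qed.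

Lemma ins_at_catl (V : eqType) i u (P Q : seq V) : i <= size P -> ins_at i u (P ++ Q) = ins_at i u P ++ Q.
Proof. by move=> H; rewrite /ins_at takel_cat // drop_catl // -catA. Qed.

Lemma ins_at_catr (V : eqType) i u (P Q : seq V) : ins_at (size P + i) u (P ++ Q) = P ++ ins_at i u Q.
Proof. by rewrite /ins_at take_catr drop_catr catA. Qed.

Lemma size_ins (V : eqType) i u (p : seq V) : size (ins_at i u p) = (size p).+1.
Proof. by rewrite /ins_at size_cat /= addnS -size_cat cat_take_drop. Qed.

Lemma del_split (V : eqType) i z (p : seq V) : i < size p ->
  p = take i p ++ nth z p i :: drop i.+1 p.
Proof. by move=> H; rewrite -drop_nth // cat_take_drop. Qed.

Lemma size_del (V : eqType) i (p : seq V) : i < size p -> size (del_at i p) = (size p).-1.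
Proof.
move=> H; case: p H => [|z p0] H //.
by rewrite {2}(del_split z H) /del_at !size_cat /= addnS.
Qed.

Lemma subseq_del (V : eqType) (a b : seq V) : subseq b a -> size b = (size a).-1 -> 0 < size a ->
  exists2 i, i < size a & b = del_at i a.
Proof.
elim: a b => [|x a IH] b //= Hs Hsz _.
case: b Hs Hsz => [|y b] /=.
  move=> _ H; exists 0 => //; by case: a IH H.
case: eqP => [Exy|Nxy] Hs Hsz.
  have Ha : 0 < size a by rewrite -Hsz.
  have Hs' : size b = (size a).-1 by rewrite -Hsz.
  have [i Hi Eb] := IH b Hs Hs' Ha.
  by exists i.+1 => //; rewrite Exy Eb.
exists 0 => //.
move: (size_subseq_leqif Hs) => [_]; rewrite /= Hsz eqxx => /esym/eqP ->.
by rewrite /del_at /= drop0.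
Qed.

Local Open Scope ring_scope.

Lemma fpath_cat (V : eqType) (R : realType) (f : V -> R) p q :
  Defs.fpath f (p ++ q) = Defs.fpath f p + Defs.fpath f q.
Proof. by rewrite /Defs.fpath big_cat. Qed.

Lemma fpath_cons (V : eqType) (R : realType) (f : V -> R) x q :
  Defs.fpath f (x :: q) = f x + Defs.fpath f q.
Proof. by rewrite /Defs.fpath big_cons. Qed.

Lemma fpath_del (V : eqType) (R : realType) (f : V -> R) i z (p : seq V) : (i < size p)%N ->
  Defs.fpath f p = Defs.fpath f (del_at i p) + f (nth z p i).
Proof.
move=> H; rewrite {1}(del_split z H) /del_at !fpath_cat fpath_cons; ring.
Qed.

Lemma fpath_ins (V : eqType) (R : realType) (f : V -> R) i u (p : seq V) :
  Defs.fpath f (ins_at i u p) = Defs.fpath f p + f u.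
Proof.
rewrite /ins_at -{3}(cat_take_drop i p) !fpath_cat fpath_cons; ring.
Qed.

Definition ND (V : eqType) (e : rel V) (R : realType) (f : V -> R) (p : seq V) :=
  exists i z, [/\ (i < size p)%N, f (nth z p i) = 0 & allowed e (del_at i p)].
Definition NI (V : eqType) (e : rel V) (R : realType) (f : V -> R) (p : seq V) :=
  exists i u, [/\ (i <= size p)%N, f u = 0 & allowed e (ins_at i u p)].

Lemma ncrit_of (V : eqType) (e : rel V) (R : realType) (f : V -> R) (p : seq V) :
  allowed e p -> ~ critical e f p -> ND e f p \/ NI e f p.
Proof.
case: p => [|x p0] // Hp Hc.
set p := x :: p0.
case: (Classical_Prop.classic (exists b, [/\ allowed e b, size b = (size p).-1, subseq b p
     & Defs.fpath f b = Defs.fpath f p])) => [[b [Hb Hsz Hsub Hfp]]|HA].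
  have [i Hi Eb] := subseq_del Hsub Hsz isT.
  left; exists i, x; split => //; last by rewrite -Eb.
  move: Hfp; rewrite (fpath_del f x Hi) -Eb => H.
  lra.
case: (Classical_Prop.classic (exists a, [/\ allowed e a, size a = (size p).+1, subseq p a
     & Defs.fpath f a = Defs.fpath f p])) => [[a [Ha Hsz Hsub Hfp]]|HB]; last first.
  by case: Hc; split.
have Hsz' : size p = (size a).-1 by rewrite Hsz.
have Hpos : (0 < size a)%N by rewrite Hsz.
have [i Hi Ep] := subseq_del Hsub Hsz' Hpos.
have Ea : a = ins_at i (nth x a i) p.
  rewrite Ep /ins_at /del_at take_size_cat ?size_take ?Hi //.
  by rewrite drop_size_cat ?size_take ?Hi // -drop_nth // cat_take_drop.
right; exists i, (nth x a i); split.
- by rewrite -ltnS -Hsz.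
- move: Hfp; rewrite {1}Ea fpath_ins => H; lra.
- by rewrite -Ea.
Qed.

Lemma notcrit_of (V : eqType) (e : rel V) (R : realType) (f : V -> R) (p : seq V) :
  ND e f p \/ NI e f p -> ~ critical e f p.
Proof.
case=> [[i [z [Hi fz Hal]]]|[i [u [Hi fu Hal]]]] [HA HB].
  apply: HA; exists (del_at i p); split => //.
  - by rewrite size_del.
  - rewrite {2}(del_split z Hi) /del_at; apply: cat_subseq => //; exact: subseq_cons.
  - by rewrite (fpath_del f z Hi) fz addr0.
apply: HB; exists (ins_at i u p); split => //.
- by rewrite size_ins.
- rewrite {1}(esym (cat_take_drop i p)) /ins_at; apply: cat_subseq => //; exact: subseq_cons.
- by rewrite fpath_ins fu addr0.
Qed.

Lemma zero_cycle (V : eqType) (e : rel V) (R : realType) (f : V -> R) :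
  morse_cond_i e f -> forall z q, f z = 0 -> path e z (rcons q z) -> False.
Proof.
move=> Hi z q fz Hp.
have Hal : allowed e (z :: rcons q z) by [].
have H1 : allowed e (del_at 0 (z :: rcons q z)).
  rewrite /del_at /= drop0; case: q Hp {Hal} => [|y q] //= /andP[_ H] //.
have H2 : allowed e (del_at (size q).+1 (z :: rcons q z)).
  rewrite /del_at /= drop_oversize ?size_rcons // cats0 -cats1 takel_cat // take_size.
  by move: Hp; rewrite rcons_path => /andP[].
have := Hi z (rcons q z) Hal 0 (size q).+1.
rewrite /= size_rcons ltnS leqnn nth_rcons ltnn eqxx => /(_ isT isT fz H1 fz H2).
done.
Qed.

Lemma cycle_nz (V : eqType) (e : rel V) (R : realType) (f : V -> R) x q y :
  morse_cond_i e f -> path e x (rcons q x) -> y \in x :: q -> f y <> 0.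
Proof.
move=> Hi Hp Hy fy.
have Hc : cycle e (x :: q) by [].
case: (rot_to Hy) => i q' Hr.
rewrite -(rot_cycle i) Hr in Hc.
exact: (zero_cycle Hi fy Hc).
Qed.

Lemma split_loopP (V : eqType) (pre s : seq V) : uniq pre ->
  match split_loop pre s with
  | None => uniq (pre ++ s)
  | Some (b, g, r) => exists c x d s2, [/\ pre ++ s = c ++ x :: d ++ x :: s2,
       b = rcons c x, g = x :: rcons d x, r = x :: s2 & uniq (c ++ x :: d)]
  end.
Proof.
elim: s pre => [|y s IH] pre Hu /=; first by rewrite cats0.
case: ifP => Hy.
  set j := index y pre.
  have Hj : (j < size pre)%N by rewrite index_mem.
  have Hn : nth y pre j = y by rewrite nth_index.
  have Hpre : pre = take j pre ++ y :: drop j.+1 pre.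
    by rewrite -{1}(cat_take_drop j pre) (drop_nth y Hj) Hn.
  exists (take j pre), y, (drop j.+1 pre), s; split.
  - by rewrite {1}Hpre -catA.
  - by rewrite (take_nth y Hj) Hn.
  - by rewrite (drop_nth y Hj) Hn /= cats1.
  - done.
  - by rewrite -Hpre.
have := IH (rcons pre y); rewrite rcons_uniq Hy Hu => /(_ isT).
by rewrite cat_rcons.
Qed.

Lemma split_size (V : eqType) (p : seq V) b g r :
  split_loop [::] p = Some (b, g, r) -> (size r < size p)%N.
Proof.
move=> E; have := @split_loopP _ [::] p isT; rewrite E.
case=> c [x [d [s2 [Ep _ _ -> _]]]]; move: Ep => /= ->.
rewrite size_cat /= size_cat /=; lia.
Qed.

Lemma decomp_fuel_indep (V : eqType) n m (p : seq V) :
  (size p <= n)%N -> (size p <= m)%N -> decomp_fuel n p = decomp_fuel m p.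
Proof.
elim: n m p => [|n IH] [|m] p /=.
- done.
- by case: p.
- by case: p.
- move=> Hn Hm; case E: (split_loop [::] p) => [[[b g] r]|] //.
  have Hs := split_size E.
  rewrite (IH m r) // -ltnS (leq_trans Hs) //.
Qed.

Lemma decomp_fuelS (V : eqType) n (p : seq V) : decomp_fuel n.+1 p =
  match split_loop [::] p with
  | None => ([::], p)
  | Some (b, g, r) => let (ps, bk) := decomp_fuel n r in ((b, g) :: ps, bk)
  end.
Proof. by []. Qed.

Lemma decomp_eq_aux (V : eqType) n (p : seq V) : size p = n.+1 -> decomp_fuel n.+1 p =
  match split_loop [::] p with
  | None => ([::], p)
  | Some (b, g, r) => ((b, g) :: (decomp r).1, (decomp r).2)
  end.
Proof.
move=> Hp; rewrite decomp_fuelS.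
case E: (split_loop [::] p) => [[[b g] r]|]; last by [].
have Hs := split_size E.
have Hr : (size r <= n)%N by rewrite -ltnS -Hp.
rewrite /decomp (@decomp_fuel_indep _ n (size r) r Hr (leqnn _)).
by case: (decomp_fuel (size r) r).
Qed.

Lemma decomp_eq (V : eqType) (p : seq V) : decomp p =
  match split_loop [::] p with
  | None => ([::], p)
  | Some (b, g, r) => ((b, g) :: (decomp r).1, (decomp r).2)
  end.
Proof.
case: p => [|x p0]; first by [].
rewrite /decomp [size (x :: p0)]/=.
exact: (@decomp_eq_aux _ (size p0) (x :: p0) erefl).
Qed.

Lemma pieces_some (V : eqType) (p : seq V) b g r : split_loop [::] p = Some (b, g, r) ->
  decomp_pieces p = b :: g :: decomp_pieces r.
Proof. by move=> E; rewrite /decomp_pieces decomp_eq E. Qed.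

Lemma pieces_none (V : eqType) (p : seq V) : split_loop [::] p = None ->
  decomp_pieces p = [:: p].
Proof. by move=> E; rewrite /decomp_pieces decomp_eq E. Qed.

Lemma betas_some (V : eqType) (p : seq V) b g r : split_loop [::] p = Some (b, g, r) ->
  decomp_betas p = b :: decomp_betas r.
Proof. by move=> E; rewrite /decomp_betas decomp_eq E. Qed.

Lemma betas_none (V : eqType) (p : seq V) : split_loop [::] p = None ->
  decomp_betas p = [:: p].
Proof. by move=> E; rewrite /decomp_betas decomp_eq E. Qed.

Lemma concat_all_cons (V : eqType) (p : seq V) ps : ps != [::] ->
  concat_all (p :: ps) = obind (concat p) (concat_all ps).
Proof. by case: ps. Qed.

Lemma concat_rcons (V : eqType) (c : seq V) x t :
  concat (rcons c x) (x :: t) = Some (rcons c x ++ t).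
Proof. by case: c => [|y c] /=; rewrite ?last_rcons eqxx. Qed.

Lemma pieces_nonnil (V : eqType) (p : seq V) : decomp_pieces p != [::].
Proof. by rewrite /decomp_pieces; case: flatten. Qed.

Lemma partA (V : eqType) (e : rel V) : irreflexive e ->
  forall n (alpha : seq V), (size alpha < n)%N -> allowed e alpha ->
     concat_all (decomp_pieces alpha) = Some alpha /\
     (forall bg, bg \in (decomp alpha).1 ->
        simplicial e bg.1 /\ directed_loop e bg.2) /\
     simplicial e (decomp alpha).2.
Proof.
move=> Hirr; elim=> [|n IH] alpha // Hsz Hal.
have := @split_loopP _ [::] alpha isT.
case E: (split_loop [::] alpha) => [[[b g] r]|] /=; last first.
  move=> Hu; rewrite pieces_none // decomp_eq E /=; split => //; split => //.
  by rewrite /simplicial Hal.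
case=> c [x [d [s2 [Ea Eb Eg Er Hu]]]]; subst b g r.
have Ha2 : alpha = (c ++ x :: d) ++ x :: s2 by rewrite Ea -catA.
have Hr : allowed e (x :: s2) by apply: (@allowed_catr _ _ (c ++ x :: d)); rewrite -?Ha2.
have Hsr : (size (x :: s2) < n)%N.
  by move: Hsz; rewrite Ha2 !size_cat /=; lia.
have [IH1 [IH2 IH3]] := IH _ Hsr Hr.
have Hg : allowed e (x :: rcons d x).
  have Ha3 : alpha = c ++ ((x :: rcons d x) ++ s2) by rewrite Ea /= -cats1 -!catA.
  apply: (@allowed_catl _ _ _ s2) => //.
  by apply: (@allowed_catr _ _ c) => //; rewrite -Ha3.
split.
  rewrite (pieces_some E) concat_all_cons // concat_all_cons ?pieces_nonnil // IH1 /=.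
  rewrite last_rcons eqxx /= concat_rcons.
  by rewrite Ea -!cats1 -!catA.
rewrite decomp_eq E /=; split => //.
move=> bg; rewrite in_cons => /orP[/eqP -> /=|]; last exact: IH2.
split.
  apply/andP; split.
    have Ha3 : alpha = rcons c x ++ (d ++ x :: s2) by rewrite Ea cat_rcons.
    apply: (@allowed_catl _ _ _ (d ++ x :: s2)); first by case: (c).
    by rewrite -Ha3.
  apply: (subseq_uniq _ Hu); rewrite -cats1; apply: cat_subseq => //.
  by rewrite /= eqxx sub0seq.
apply/and3P; split => //.
  case: (d) Hg => [|y d0] //=; first by rewrite Hirr.
  by rewrite size_rcons.
by rewrite last_rcons.
Qed.

Local Close Scope ring_scope.

Lemma ins_at_cons (V : eqType) k u x (s : seq V) : ins_at k.+1 u (x :: s) = x :: ins_at k u s.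
Proof. by []. Qed.

Lemma partB (V : eqType) (e : rel V) (R : realType) (f : V -> R) :
  morse_cond_i e f ->
  forall n (alpha : seq V), (size alpha < n)%N -> allowed e alpha ->
  ND e f alpha \/ NI e f alpha ->
  exists2 beta, beta \in decomp_betas alpha & (ND e f beta \/ NI e f beta).
Proof.
move=> Hmi; elim=> [|n IH] alpha // Hsz Hal Hnc.
have := @split_loopP _ [::] alpha isT.
case E: (split_loop [::] alpha) => [[[b g] r]|] /=; last first.
  by move=> _; exists alpha => //; rewrite betas_none // mem_seq1.
case=> c [x [d [s2 [Ea Eb Eg Er Hu]]]]; subst b g r.
rewrite (betas_some E).
set P := c ++ x :: d.
have Ha2 : alpha = P ++ x :: s2 by rewrite Ea /P -catA.
have Ha1 : alpha = rcons c x ++ (d ++ x :: s2) by rewrite Ea cat_rcons.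
have Hsr : (size (x :: s2) < n)%N.
  by move: Hsz; rewrite Ha2 !size_cat /=; lia.
have Hg : path e x (rcons d x).
  have Ha3 : alpha = c ++ ((x :: rcons d x) ++ s2) by rewrite Ea /= -cats1 -!catA.
  have : allowed e (x :: rcons d x).
    apply: (@allowed_catl _ _ _ s2) => //.
    by apply: (@allowed_catr _ _ c) => //; rewrite -Ha3.
  by [].
have Hnz : forall y, y \in x :: d -> f y <> 0%R by move=> y Hy; exact: (cycle_nz Hmi Hg Hy).
have useR : ND e f (x :: s2) \/ NI e f (x :: s2) ->
   exists2 beta, beta \in rcons c x :: decomp_betas (x :: s2) & (ND e f beta \/ NI e f beta).
  move=> H.
  have Hr : allowed e (x :: s2) by apply: (@allowed_catr _ _ P); rewrite -?Ha2.
  have [beta Hb Hb2] := IH _ Hsr Hr H.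
  by exists beta => //; rewrite in_cons Hb orbT.
case: Hnc => [[i [z [Hi fz Hdel]]]|[i [u [Hi fu Hins]]]].
- case: (ltnP i (size c)) => Hic.
    exists (rcons c x); first by rewrite mem_head.
    have Hib : (i < size (rcons c x))%N by rewrite size_rcons ltnW.
    left; exists i, z; split => //.
      by move: fz; rewrite Ha1 nth_cat Hib.
    move: Hdel; rewrite Ha1 del_at_catl //.
    apply: allowed_catl.
    by rewrite -size_eq0 size_del // size_rcons /=; case: (size c) Hic.
  case: (ltnP i (size P)) => HiP.
    exfalso; apply: (Hnz (nth z (x :: d) (i - size c))).
      by rewrite mem_nth // -(ltn_add2l (size c)) subnKC // -size_cat.
    by move: fz; rewrite Ha2 nth_cat HiP /P nth_cat ltnNge Hic.
  have Ei : i = size P + (i - size P) by rewrite subnKC.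
  move: Ei fz Hdel Hi; set i' := i - size P => -> .
  rewrite Ha2 nth_cat ltnNge leq_addr /= addKn del_at_catr size_cat => fz Hdel Hi.
  case: i' fz Hdel Hi => [|k] fz Hdel Hi.
    by exfalso; apply: (Hnz x); rewrite ?mem_head.
  apply: useR; left; exists k.+1, z; split => //.
    by move: Hi; rewrite /= ltn_add2l.
  by apply: (@allowed_catr _ _ P) => //.
- case: (leqP i (size c).+1) => Hic.
    exists (rcons c x); first by rewrite mem_head.
    right; exists i, u; split => //; first by rewrite size_rcons.
    move: Hins; rewrite Ha1 ins_at_catl ?size_rcons //.
    by apply: allowed_catl; rewrite -size_eq0 size_ins.
  case: (ltnP i (size P)) => HiP.
    exfalso.
    have Ei : i = size c + (i - size c).-1.+1 by lia.
    move: Hins; rewrite Ea Ei ins_at_catr.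
    have Hk : ((i - size c).-1 <= size d)%N by move: HiP; rewrite /P size_cat /=; lia.
    rewrite ins_at_cons ins_at_catl // => Hal2.
    have Hal3 : allowed e (x :: (ins_at (i - size c).-1 u d ++ x :: s2)).
      by apply: (@allowed_catr _ _ c).
    have Hp : path e x (rcons (ins_at (i - size c).-1 u d) x).
      move: Hal3; rewrite /= cat_path rcons_path /= => /and3P[-> -> _].
      done.
    apply: (cycle_nz Hmi Hp _ fu).
    by rewrite in_cons /ins_at mem_cat in_cons eqxx !orbT.
  have Ei : i = size P + (i - size P) by rewrite subnKC.
  move: Ei Hins Hi; set i' := i - size P => -> .
  rewrite Ha2 ins_at_catr size_cat => Hins Hi.
  apply: useR; right; exists i', u; split => //.
    by move: Hi; rewrite leq_add2l.
  by apply: (@allowed_catr _ _ P) => //; rewrite -size_eq0 size_ins.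
Qed.

Theorem lemma4p5 (V : eqType) (e : rel V) (R : realType) (f : V -> R) :
  irreflexive e ->
  (* (a) the algorithmic decomposition alpha = beta_1 * gamma_1 * ... * beta_k *)
  (forall alpha : seq V, allowed e alpha ->
     concat_all (decomp_pieces alpha) = Some alpha /\
     (forall bg, bg \in (decomp alpha).1 ->
        simplicial e bg.1 /\ directed_loop e bg.2) /\
     simplicial e (decomp alpha).2) /\
  (* (b) *)
  (discrete_morse e f ->
   forall alpha : seq V, allowed e alpha -> ~ critical e f alpha ->
     exists2 beta, beta \in decomp_betas alpha & ~ critical e f beta).
Proof.
move=> Hirr; split.
  move=> alpha; exact: (partA Hirr (ltnSn (size alpha))).
move=> [_ [Hmi _]] alpha Hal Hc.
have [beta Hb Hb2] := partB Hmi (ltnSn (size alpha)) Hal (ncrit_of Hal Hc).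
by exists beta => //; apply: notcrit_of.
Qed.
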